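(* Let $N\ge 2$, let $K\in\mathbb{R}^{N\times N}$ be symmetric positive semi-definite, let $\lambda>0$ and $y\in\mathbb{R}^N$. Set $A:=(K+\lambda I)^{-1}$, $\alpha=\alpha(K):=Ay$, $\beta:=A\alpha$, and $\mathcal{L}_{\mathrm{tr}}(K):=\lambda^2\|\alpha(K)\|_2^2$. For $i\neq j$ let $E_{ij}:=e_ie_j^\top+e_je_i^\top$, and regard $\mathcal{L}_{\mathrm{tr}}$ as a function of the upper-triangular entries of the symmetric matrix $K$, so that a change of the entry $K_{ij}$ ($i<j$) by $t$ corresponds to $K\mapsto K+tE_{ij}$. Then for $i\neq j$: (1) $g_{ij}:=\dfrac{\partial\mathcal{L}_{\mathrm{tr}}}{\partial K_{ij}}=-2\lambda^2(\beta_i\alpha_j+\beta_j\alpha_i)$; (2) the diagonal Hessian entry $H_{ij}:=\dfrac{\partial^2\mathcal{L}_{\mathrm{tr}}}{\partial K_{ij}^2}$ decomposes as $H_{ij}=\tilde H_{ij}+R_{ij}$, where $\tilde H_{ij}:=2\lambda^2\|AE_{ij}\alpha\|_2^2\ge 0$ and $R_{ij}=4\lambda^2\bigl[A_{ij}(\beta_i\alpha_j+\beta_j\alpha_i)+A_{ii}\beta_j\alpha_j+A_{jj}\beta_i\alpha_i\bigr]$; (3) $|R_{ij}|\le 8\|y\|_2\lambda^{-1}(|\alpha_i|+|\alpha_j|)$; (4) both $\tilde H_{ij}$ and $R_{ij}$ vanish whenever $\alpha_i=\alpha_j=0$.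
   Context: $e_i$ denotes the $i$-th standard basis vector of $\mathbb{R}^N$. $\mathcal{L}_{\mathrm{tr}}$ is the training squared loss $\|y-K\alpha\|^2$ of kernel ridge regression, which equals $\lambda^2\|\alpha\|^2$. *)

(* Defs.v *)
From HB Require Import structures.
From mathcomp Require Import all_boot all_order all_algebra.
From mathcomp Require Import all_classical all_reals all_analysis.
Set Implicit Arguments. Unset Strict Implicit. Unset Printing Implicit Defensive.
Import Order.TTheory GRing.Theory Num.Theory.
Import numFieldNormedType.Exports.
Local Open Scope ring_scope.

Section KRR.
Variables (R : realType) (N : nat).

Definition sqnorm (v : 'cV[R]_N) : R := \sum_(k < N) (v k 0) ^+ 2.

Definition psd (K : 'M[R]_N) : Prop :=
  forall v : 'cV[R]_N, 0 <= (v^T *m K *m v) 0 0.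

Definition Emat (i j : 'I_N) : 'M[R]_N := delta_mx i j + delta_mx j i.

Definition Amat (K : 'M[R]_N) (lam : R) : 'M[R]_N := invmx (K + lam%:M).

Definition alpha (K : 'M[R]_N) (lam : R) (y : 'cV[R]_N) : 'cV[R]_N :=
  Amat K lam *m y.
Definition beta (K : 'M[R]_N) (lam : R) (y : 'cV[R]_N) : 'cV[R]_N :=
  Amat K lam *m alpha K lam y.

Definition Ltr (lam : R) (y : 'cV[R]_N) (K : 'M[R]_N) : R :=
  lam ^+ 2 * sqnorm (alpha K lam y).

End KRR.
Arguments Emat {R N}.
Arguments sqnorm {R N}.
Arguments psd {R N}.
Arguments Amat {R N}.
Arguments alpha {R N}.
Arguments beta {R N}.
Arguments Ltr {R N}.

(* Main.v *)
Require Import Defs.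
From HB Require Import structures.
From mathcomp Require Import all_boot all_order all_algebra.
From mathcomp Require Import all_classical all_reals all_analysis.
Import Order.TTheory GRing.Theory Num.Theory.
Import numFieldNormedType.Exports.
Local Open Scope classical_set_scope.
Local Open Scope ring_scope.
From mathcomp Require Import ring lra.
Lemma dotE {R : realType} {N : nat} (u w : 'cV[R]_N) :
  (u^T *m w) 0 0 = \sum_a u a 0 * w a 0.
Proof. by rewrite !mxE; apply: eq_bigr => a _; rewrite mxE. Qed.

Lemma dotC {R : realType} {N : nat} (u w : 'cV[R]_N) :
  (u^T *m w) 0 0 = (w^T *m u) 0 0.
Proof. by rewrite !dotE; apply: eq_bigr => a _; rewrite mulrC. Qed.

Lemma sqnormE {R : realType} {N : nat} (v : 'cV[R]_N) : sqnorm v = (v^T *m v) 0 0.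
Proof. by rewrite dotE /sqnorm; apply: eq_bigr => a _; rewrite expr2. Qed.

Lemma sqnorm_ge0 {R : realType} {N : nat} (v : 'cV[R]_N) : 0 <= sqnorm v.
Proof. by apply: sumr_ge0 => a _; apply: sqr_ge0. Qed.

Lemma sqnorm_entry {R : realType} {N : nat} (v : 'cV[R]_N) a : v a 0 ^+ 2 <= sqnorm v.
Proof.
rewrite /sqnorm (bigD1 a) //= lerDl; by apply: sumr_ge0 => b _; apply: sqr_ge0.
Qed.

Lemma sqnorm2 {R : realType} {N : nat} (v : 'cV[R]_N) (i j : 'I_N) : i != j ->
  v i 0 ^+ 2 + v j 0 ^+ 2 <= sqnorm v.
Proof.
move=> ij; rewrite /sqnorm (bigD1 i) //= (bigD1 j) /=; last by rewrite eq_sym.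
by rewrite addrA lerDl; apply: sumr_ge0 => b _; apply: sqr_ge0.
Qed.

Lemma sum_delta {R : realType} {N : nat} (F : 'I_N -> R) (i : 'I_N) (c : R) :
  \sum_a F a * ((a == i)%:R * c) = F i * c.
Proof.
rewrite (bigD1 i) //= eqxx mul1r big1 ?addr0 // => a /negbTE ->.
by rewrite mul0r mulr0.
Qed.

Lemma Emul {R : realType} {N : nat} (i j : 'I_N) (v : 'cV[R]_N) a :
  (Emat i j *m v) a 0 = (a == i)%:R * v j 0 + (a == j)%:R * v i 0.
Proof.
rewrite /Emat mulmxDl mxE !mxE.
rewrite (bigD1 j) //= big1 => [|b /negbTE hb]; last by rewrite mxE hb andbF mul0r.
rewrite [X in _ + X](bigD1 i) //= [X in _ + (_ + X)]big1 => [|b /negbTE hb];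
  last by rewrite mxE hb andbF mul0r.
by rewrite !mxE !eqxx !andbT !addr0.
Qed.

Lemma dotEmul {R : realType} {N : nat} (i j : 'I_N) (u v : 'cV[R]_N) :
  (u^T *m (Emat i j *m v)) 0 0 = u i 0 * v j 0 + u j 0 * v i 0.
Proof.
rewrite dotE; under eq_bigr do rewrite Emul mulrDr.
by rewrite big_split /= !sum_delta.
Qed.

Lemma mxaddE {R : realType} {m n : nat} (A B : 'M[R]_(m, n)) a b : (A + B) a b = A a b + B a b.
Proof. by rewrite mxE. Qed.
Lemma mxscaleE {R : realType} {m n : nat} (c : R) (A : 'M[R]_(m, n)) a b : (c *: A) a b = c * A a b.
Proof. by rewrite mxE. Qed.
Lemma mxoppE {R : realType} {m n : nat} (A : 'M[R]_(m, n)) a b : (- A) a b = - A a b.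
Proof. by rewrite mxE. Qed.

Lemma qfM {R : realType} {N : nat} (K : 'M[R]_N) (i j : 'I_N) (s lam : R) (u : 'cV[R]_N) :
  (u^T *m (K + s *: Emat i j + lam%:M) *m u) 0 0 =
  (u^T *m K *m u) 0 0 + s * (2 * (u i 0 * u j 0)) + lam * sqnorm u.
Proof.
rewrite -!mulmxA !mulmxDl !mulmxDr -scalemxAl mul_scalar_mx -!scalemxAr.
rewrite !mxaddE !mxscaleE.
rewrite dotEmul -sqnormE; congr (_ + _ * _ + _).
by rewrite mulrC [u j 0 * _]mulrC mulr2n -mulr2n mulr_natl.
Qed.

Lemma qf_lb {R : realType} {N : nat} (K : 'M[R]_N) (i j : 'I_N) (s lam : R) (u : 'cV[R]_N) :
  psd K -> i != j ->
  (lam - `|s|) * sqnorm u <= (u^T *m (K + s *: Emat i j + lam%:M) *m u) 0 0.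
Proof.
move=> pK ij; rewrite qfM.
have h1 := pK u. have h2 := @sqnorm2 _ _ u _ _ ij.
have h3 : - (`|s| * (u i 0 ^+ 2 + u j 0 ^+ 2)) <= s * (2 * (u i 0 * u j 0)).
  have [s0|s0] := leP 0 s.
    rewrite ger0_norm //; have := sqr_ge0 (u i 0 + u j 0); nra.
  rewrite ltr0_norm //; have := sqr_ge0 (u i 0 - u j 0); nra.
have h4 : 0 <= `|s| := normr_ge0 s.
nra.
Qed.

Lemma qf_unit {R : realType} {N : nat} (M : 'M[R]_N) (c : R) : 0 < c ->
  (forall u : 'cV[R]_N, c * sqnorm u <= (u^T *m M *m u) 0 0) -> M \in unitmx.
Proof.
move=> c0 H; rewrite unitmxE unitfE; apply/negP => /det0P [v v0 vM].
have := H v^T; rewrite trmxK vM mul0mx mxE => h.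
have hs : sqnorm v^T = 0.
  apply/le_anti/andP; split; last exact: sqnorm_ge0.
  by rewrite -(pmulr_rle0 _ c0).
move/negP: v0; apply; apply/eqP/matrixP => a b.
rewrite (ord1 a) mxE.
have := @psumr_eq0P _ _ _ _ (fun k _ => sqr_ge0 (v^T k 0)) hs b isT.
by rewrite mxE => /eqP; rewrite sqrf_eq0 => /eqP.
Qed.

Lemma qf_solve {R : realType} {N : nat} (M : 'M[R]_N) (c : R) (u w : 'cV[R]_N) : 0 < c ->
  (forall u : 'cV[R]_N, c * sqnorm u <= (u^T *m M *m u) 0 0) -> M *m u = w ->
  c ^+ 2 * sqnorm u <= sqnorm w.
Proof.
move=> c0 H Mu; have h1 := H u; rewrite -mulmxA Mu dotE in h1.
have h2 : 2 * c * (\sum_a u a 0 * w a 0) <= c ^+ 2 * sqnorm u + sqnorm w.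
  rewrite /sqnorm mulr_sumr mulr_sumr -big_split; apply: ler_sum => a _ /=.
  have := sqr_ge0 (c * u a 0 - w a 0); nra.
nra.
Qed.

Lemma inv_entry {R : realType} {N : nat} (M : 'M[R]_N) (c : R) a b : 0 < c ->
  (forall u : 'cV[R]_N, c * sqnorm u <= (u^T *m M *m u) 0 0) ->
  c * `|invmx M a b| <= 1.
Proof.
move=> c0 H; have Mu := @qf_unit _ _ _ _ c0 H.
have := @qf_solve _ _ _ _ (invmx M *m delta_mx b 0) (delta_mx b 0) c0 H.
rewrite mulmxA mulmxV // mul1mx => /(_ erefl).
have -> : sqnorm (delta_mx b 0 : 'cV[R]_N) = 1.
  rewrite /sqnorm (bigD1 b) //= big1 => [|k /negbTE kb]; last by rewrite mxE kb expr0n.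
  by rewrite mxE !eqxx expr1n addr0.
have := @sqnorm_entry _ _ (invmx M *m delta_mx b 0) a.
rewrite -colE mxE => h1 h2.
have h3 : (c * `|invmx M a b|) ^+ 2 <= 1.
  rewrite exprMn real_normK ?num_real //; nra.
have h4 : 0 <= c * `|invmx M a b| by rewrite mulr_ge0 // ltW.
nra.
Qed.

Lemma derive_lim {R : realType} (f : R -> R) (t l : R) :
  (fun h : R => h^-1 *: (f (h *: 1 + t) - f t)) @ 0^' --> l -> is_derive t 1 f l.
Proof.
move=> H; have d : derivable f t 1 by apply/cvg_ex; exists l; exact: H.
apply: DeriveDef => //; exact: (cvg_lim _ H).
Qed.

Definition mxder {R : realType} {m n : nat} (U : R -> 'M[R]_(m, n)) (t : R) (dU : 'M[R]_(m, n)) :=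
  forall a b, is_derive t 1 (fun s => U s a b) (dU a b).
Arguments mxder {R m n}.

Lemma mxder_cst {R : realType} {m n : nat} (C : 'M[R]_(m, n)) t : mxder (fun _ => C) t 0.
Proof. move=> a b; rewrite mxE; exact: is_derive_cst. Qed.

Lemma is_derive_sumf {R : realType} {n : nat} (F : 'I_n -> R -> R) (dF : 'I_n -> R) (t : R) :
  (forall k, is_derive t 1 (F k) (dF k)) ->
  is_derive t 1 (fun s => \sum_k F k s) (\sum_k dF k).
Proof.
move=> H; have := is_derive_sum H; rewrite fct_sumE; exact.
Qed.

Lemma is_derive_mulf {R : realType} {f g : R -> R} {t df dg : R} :
  is_derive t 1 f df -> is_derive t 1 g dg ->
  is_derive t 1 (fun s => f s * g s) (f t * dg + g t * df).
Proof. move=> hf hg; exact: (is_deriveM hf hg). Qed.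

Lemma mxder_mul {R : realType} {m n p : nat} {U : R -> 'M[R]_(m, n)} {V : R -> 'M[R]_(n, p)} {t dU dV} :
  mxder U t dU -> mxder V t dV ->
  mxder (fun s => U s *m V s) t (dU *m V t + U t *m dV).
Proof.
move=> hU hV a b.
have -> : (fun s => (U s *m V s) a b) = (fun s => \sum_k U s a k * V s k b).
  by apply: funext => s; rewrite mxE.
apply: is_derive_eq; first by apply: is_derive_sumf => k; apply: is_derive_mulf.
rewrite !mxE -big_split /=; apply: eq_bigr => k _.
by rewrite addrC [V t k b * _]mulrC.
Qed.

Lemma mxder_tr {R : realType} {m n : nat} {U : R -> 'M[R]_(m, n)} {t dU} :
  mxder U t dU -> mxder (fun s => (U s)^T) t dU^T.
Proof.
move=> hU a b.
have -> : (fun s => (U s)^T a b) = (fun s => U s b a) by apply: funext => s; rewrite mxE.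
by rewrite mxE.
Qed.

Lemma mxder_opp {R : realType} {m n : nat} {U : R -> 'M[R]_(m, n)} {t dU} :
  mxder U t dU -> mxder (fun s => - U s) t (- dU).
Proof.
move=> hU a b.
have -> : (fun s => (- U s) a b) = - (fun s => U s a b) by apply: funext => s; rewrite !mxE.
by rewrite mxE; apply: is_deriveN.
Qed.

Lemma Ms_unit {R : realType} {N : nat} (K : 'M[R]_N) (i j : 'I_N) (lam s : R) :
  psd K -> i != j -> `|s| < lam -> K + s *: Emat i j + lam%:M \in unitmx.
Proof.
move=> pK ij sl; apply: (@qf_unit _ _ _ (lam - `|s|)); first by rewrite subr_gt0.
by move=> u; apply: qf_lb.
Qed.

Lemma resolvent {R : realType} {N : nat} (K : 'M[R]_N) (i j : 'I_N) (lam s t : R) :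
  K + s *: Emat i j + lam%:M \in unitmx -> K + t *: Emat i j + lam%:M \in unitmx ->
  invmx (K + s *: Emat i j + lam%:M) - invmx (K + t *: Emat i j + lam%:M) =
  (t - s) *: (invmx (K + s *: Emat i j + lam%:M) *m Emat i j *m invmx (K + t *: Emat i j + lam%:M)).
Proof.
set Ms := K + s *: _ + _; set Mt := K + t *: _ + _ => us ut.
have e : Mt - Ms = (t - s) *: Emat i j.
  by apply/matrixP => a b; rewrite !mxE; ring.
have -> : invmx Ms - invmx Mt = invmx Ms *m (Mt - Ms) *m invmx Mt.
  rewrite mulmxBr mulmxBl -!mulmxA mulmxV // mulmxA mulVmx // mulmx1 mul1mx.
  by [].
by rewrite e -scalemxAr -scalemxAl.
Qed.

Lemma entry_bound {R : realType} {N : nat} (K : 'M[R]_N) (i j : 'I_N) (lam s c : R) :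
  psd K -> i != j -> 0 < c -> c <= lam - `|s| ->
  forall a b, c * `|invmx (K + s *: Emat i j + lam%:M) a b| <= 1.
Proof.
move=> pK ij c0 cl a b; apply: inv_entry => // u.
apply: le_trans (@qf_lb _ _ _ _ _ s lam u pK ij).
by apply: ler_wpM2r => //; apply: sqnorm_ge0.
Qed.

Lemma prod_bound {R : realType} {N : nat} (X Y : 'M[R]_N) (c : R) k l : 0 < c ->
  (forall a b, c * `|X a b| <= 1) -> c * `|(X *m Y) k l| <= \sum_m `|Y m l|.
Proof.
move=> c0 H; rewrite mxE.
have h1 : `|\sum_m X k m * Y m l| <= \sum_m `|X k m| * `|Y m l|.
  apply: le_trans (ler_norm_sum _ _ _) _.
  by apply: ler_sum => m _; rewrite normrM.
apply: le_trans (_ : c * \sum_m `|X k m| * `|Y m l| <= _).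
  by apply: ler_wpM2l => //; exact: ltW.
rewrite mulr_sumr; apply: ler_sum => m _; rewrite mulrA.
by apply: ler_piMl => //; apply: H.
Qed.

Lemma As_der {R : realType} {N : nat} (K : 'M[R]_N) (i j : 'I_N) (lam t : R) :
  psd K -> i != j -> `|t| < lam ->
  mxder (fun s => invmx (K + s *: Emat i j + lam%:M)) t
    (- (invmx (K + t *: Emat i j + lam%:M) *m Emat i j *m invmx (K + t *: Emat i j + lam%:M))).
Proof.
move=> pK ij tl k l.
pose A := fun s => invmx (K + s *: Emat i j + lam%:M).
rewrite -/(A t).
apply: derive_lim.
pose c := (lam - `|t|) / 2.
have c0 : 0 < c by rewrite /c divr_gt0 // subr_gt0.
pose Y := Emat i j *m A t *m Emat i j *m A t.
pose B := \sum_m `|Y m l|.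
have B0 : 0 <= B by apply: sumr_ge0 => m _.
apply/cvgrPdist_le => eps eps0.
have ec : 0 < eps * c / (B + 1).
  by apply: divr_gt0; [exact: mulr_gt0 | lra].
near=> h.
have hc : `|h| < c by near: h; apply: dnbhs0_lt.
have he : `|h| < eps * c / (B + 1) by near: h; apply: dnbhs0_lt.
have h0 : h != 0 by near: h; exact: nbhs_dnbhs_neq.
have hl : c <= lam - `|h + t|.
  have := ler_normD h t; rewrite /c in hc *; lra.
have ul : `|h + t| < lam by lra.
have eA := @resolvent _ _ _ _ _ _ _ _ (@Ms_unit _ _ _ _ _ _ _ pK ij ul) (@Ms_unit _ _ _ _ _ _ _ pK ij tl).
rewrite -/(A (h + t)) -/(A t) in eA.
have eX : A (h + t) *m Emat i j *m A t - A t *m Emat i j *m A t =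
          (t - (h + t)) *: (A (h + t) *m Y).
  by rewrite -mulmxBl -mulmxBl eA -!scalemxAl /Y !mulmxA.
have key : - (A t *m Emat i j *m A t) k l - h^-1 *: (A (h *: 1 + t) k l - A t k l)
           = (t - (h + t)) * (A (h + t) *m Y) k l.
  have -> : h *: (1 : R) = h by rewrite /GRing.scale /= mulr1.
  have e1 : A (h + t) k l - A t k l = (t - (h + t)) * (A (h + t) *m Emat i j *m A t) k l.
    by rewrite -mxscaleE -eA mxaddE mxoppE.
  have e2 : (t - (h + t)) * (A (h + t) *m Y) k l =
            (A (h + t) *m Emat i j *m A t) k l - (A t *m Emat i j *m A t) k l.
    by rewrite -mxscaleE -eX mxaddE mxoppE.
  rewrite e1 e2; have -> : t - (h + t) = - h by ring.
  have sc : forall u v : R, u *: v = u * v by [].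
  rewrite sc mulNr mulrN mulrA mulVf // mul1r; ring.
rewrite mxoppE key.
have pb := @prod_bound _ _ _ Y _ k l c0 (@entry_bound _ _ _ _ _ _ _ _ pK ij c0 hl).
rewrite -/(A (h + t)) -/B in pb.
have -> : t - (h + t) = - h by ring.
rewrite normrM normrN.
have z0 := normr_ge0 ((A (h + t) *m Y) k l).
have hB : `|h| * (B + 1) < eps * c by rewrite -ltr_pdivlMr // ltr_wpDl.
have hh := normr_ge0 h.
nra.
Unshelve. all: by end_near.
Qed.

Lemma mxder_add {R : realType} {m n : nat} {U V : R -> 'M[R]_(m, n)} {t dU dV} :
  mxder U t dU -> mxder V t dV -> mxder (fun s => U s + V s) t (dU + dV).
Proof.
move=> hU hV a b.
have -> : (fun s => (U s + V s) a b) = (fun s => U s a b) + (fun s => V s a b).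
  by apply: funext => s; rewrite !mxE.
by rewrite mxE; apply: is_deriveD.
Qed.

Definition Af {R : realType} {N : nat} (K : 'M[R]_N) (i j : 'I_N) (lam s : R) :=
  invmx (K + s *: Emat i j + lam%:M).

Definition dAf {R : realType} {N : nat} (K : 'M[R]_N) (i j : 'I_N) (lam s : R) :=
  - (Af K i j lam s *m Emat i j *m Af K i j lam s).

Definition Gd {R : realType} {N : nat} (K : 'M[R]_N) (i j : 'I_N) (lam : R) (y : 'cV[R]_N) (s : R) :=
  lam ^+ 2 * (((dAf K i j lam s *m y)^T *m (Af K i j lam s *m y)
              + (Af K i j lam s *m y)^T *m (dAf K i j lam s *m y)) 0 0).

Lemma f_der {R : realType} {N : nat} (K : 'M[R]_N) (i j : 'I_N) (lam t : R) (y : 'cV[R]_N) :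
  psd K -> i != j -> `|t| < lam ->
  is_derive t 1 (fun s => Ltr lam y (K + s *: Emat i j)) (Gd K i j lam y t).
Proof.
move=> pK ij tl.
have -> : (fun s => Ltr lam y (K + s *: Emat i j)) =
  (fun s => lam ^+ 2 * (((Af K i j lam s *m y)^T *m (Af K i j lam s *m y)) 0 0)).
  by apply: funext => s; rewrite /Ltr /alpha /Amat sqnormE.
have hA := @As_der _ _ _ _ _ _ t pK ij tl.
have hy := mxder_cst y t.
have ha := mxder_mul hA hy.
have := mxder_mul (mxder_tr ha) ha 0 0.
move=> hd; refine (is_derive_eq (is_derive_mulf (is_derive_cst (lam ^+ 2) t 1) hd) _).
by rewrite /Gd /dAf mulr0 addr0 !mulmx0 !addr0.
Qed.

Lemma G_der {R : realType} {N : nat} (K : 'M[R]_N) (i j : 'I_N) (lam : R) (y : 'cV[R]_N) :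
  psd K -> i != j -> 0 < lam ->
  let A := invmx (K + 0 *: Emat i j + lam%:M) in
  is_derive (0 : R) (1 : R) (Gd K i j lam y)
    (2 * lam ^+ 2 * sqnorm (A *m Emat i j *m A *m y)
     + 4 * lam ^+ 2 * ((A *m y)^T *m (A *m Emat i j *m A *m Emat i j *m A *m y)) 0 0).
Proof.
move=> pK ij l0 A.
have tl : `|0 : R| < lam by rewrite normr0.
have hA := @As_der _ _ _ _ _ _ 0 pK ij tl.
have hy := mxder_cst y 0.
have ha := mxder_mul hA hy.
have hdA := mxder_opp (mxder_mul (mxder_mul hA (mxder_cst (Emat i j) 0)) hA).
have hda := mxder_mul hdA hy.
have := mxder_add (mxder_mul (mxder_tr hda) ha) (mxder_mul (mxder_tr ha) hda) 0 0.
move=> hd.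
rewrite /Gd; refine (is_derive_eq (is_derive_mulf (is_derive_cst (lam ^+ 2) (0 : R) (1 : R)) hd) _).
rewrite -/A mulr0 addr0 !mulmx0 !addr0.
set u := A *m y.
set E := Emat i j.
have e1 : (A *m E *m A) *m y = A *m E *m A *m y by [].
rewrite !mulmxN !mulNmx ?opprK.
set q := A *m E *m A *m E *m A *m y.
set p := A *m E *m A *m y.
have eX : (- (A *m E *m A *m E *m A) - A *m E *m (A *m E *m A)) *m y = - (q + q).
  by rewrite mulmxDl !mulNmx opprD /q /p !mulmxA.
rewrite eX opprK !linearN /= !linearD /= mulmxDl !mulNmx.
rewrite !mxaddE !mxoppE (dotC q u) -sqnormE.
rewrite /cst; ring.
Qed.

Lemma AEmul {R : realType} {N : nat} (M : 'M[R]_N) (i j : 'I_N) (v : 'cV[R]_N) k :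
  (M *m (Emat i j *m v)) k 0 = M k i * v j 0 + M k j * v i 0.
Proof.
rewrite mxE; under eq_bigr do rewrite Emul mulrDr.
by rewrite big_split /= !sum_delta.
Qed.

Local Close Scope classical_set_scope.

Theorem lemma1 (R : realType) (N : nat) (K : 'M[R]_N) (lam : R)
  (y : 'cV[R]_N) (i j : 'I_N) :
  (2 <= N)%N -> K^T = K -> psd K -> 0 < lam -> i != j ->
  let A := Amat K lam in
  let a := alpha K lam y in
  let b := beta K lam y in
  let f := fun t : R => Ltr lam y (K + t *: Emat i j) in
  let g := - 2 * lam ^+ 2 * (b i 0 * a j 0 + b j 0 * a i 0) in
  let Ht := 2 * lam ^+ 2 * sqnorm (A *m Emat i j *m a) in
  let Rij := 4 * lam ^+ 2 * (A i j * (b i 0 * a j 0 + b j 0 * a i 0)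
                             + A i i * b j 0 * a j 0 + A j j * b i 0 * a i 0) in
  [/\ is_derive (0 : R) (1 : R) f g,
      is_derive (0 : R) (1 : R) (derive1 f) (Ht + Rij),
      0 <= Ht,
      `|Rij| <= 8 * Num.sqrt (sqnorm y) * lam^-1 * (`|a i 0| + `|a j 0|)
    & (a i 0 = 0 -> a j 0 = 0 -> Ht = 0 /\ Rij = 0)].
Proof.
move=> N2 KT pK l0 ij A a b f g Ht Rij.
have e0 : K + 0 *: Emat i j + lam%:M = K + lam%:M by rewrite scale0r addr0.
have eA : A = invmx (K + lam%:M) by [].
have ea : a = A *m y by [].
have eb : b = A *m a by [].
have AT : A^T = A.
  by rewrite eA trmx_inv linearD /= KT tr_scalar_mx.
have Asym : A j i = A i j by rewrite -{1}AT mxE.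
have hbT : a^T *m A = b^T.
  by rewrite eb [(A *m a)^T]trmx_mul AT.
have tl : `|0 : R| < lam by rewrite normr0.
have unit0 : K + lam%:M \in unitmx by rewrite -e0; apply: Ms_unit.
split.
- apply: is_derive_eq; first exact: (@f_der _ _ K i j lam 0 y pK ij tl).
  rewrite /Gd /dAf /Af e0 -eA mxaddE dotC -ea !mulNmx mulmxN mxoppE -!mulmxA -ea.
  rewrite [a^T *m _]mulmxA hbT dotEmul /g; ring.
- apply: (@near_eq_is_derive _ _ _ (Gd K i j lam y)).
    near=> s.
    have sl : `|s| < lam by near: s; exact: (@nbhs0_lt _ R^o lam l0).
    have H := @f_der _ _ K i j lam s y pK ij sl.
    by rewrite derive1E (derive.derive_val (is_derive := H)).
  apply: is_derive_eq; first exact: (@G_der _ _ K i j lam y pK ij l0).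
  rewrite /= e0 -eA /Ht /Rij.
  rewrite -!mulmxA -ea [a^T *m _]mulmxA hbT dotEmul !AEmul Asym; ring.
- by rewrite /Ht mulr_ge0 ?sqnorm_ge0 // mulr_ge0 // exprn_ge0 // ltW.
- have hAb : forall k l, lam * `|A k l| <= 1.
    move=> k l; have := @entry_bound _ _ K i j lam 0 lam pK ij l0 _ k l.
    by rewrite e0 normr0 subr0 => /(_ (lexx _)).
  have Hq : forall u : 'cV[R]_N, lam * sqnorm u <= (u^T *m (K + lam%:M) *m u) 0 0.
    by move=> u; have := @qf_lb _ _ K i j 0 lam u pK ij; rewrite e0 normr0 subr0.
  have Ma : (K + lam%:M) *m a = y by rewrite ea eA mulmxA mulmxV // mul1mx.
  have Mb : (K + lam%:M) *m b = a by rewrite eb eA mulmxA mulmxV // mul1mx.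
  have s1 := @qf_solve _ _ _ _ a y l0 Hq Ma.
  have s2 := @qf_solve _ _ _ _ b a l0 Hq Mb.
  set Y := Num.sqrt (sqnorm y).
  have Y0 : 0 <= Y := sqrtr_ge0 _.
  have hbk : forall k, lam ^+ 2 * `|b k 0| <= Y.
    move=> k; have s3 := @sqnorm_entry _ _ b k.
    have sa := sqnorm_ge0 a. have sb := sqnorm_ge0 b.
    have h1 : (lam ^+ 2 * `|b k 0|) ^+ 2 <= sqnorm y.
      rewrite exprMn real_normK ?num_real //.
      have l2 : 0 <= lam ^+ 2 by rewrite exprn_ge0 // ltW.
      have w1 : lam ^+ 2 * b k 0 ^+ 2 <= lam ^+ 2 * sqnorm b by apply: ler_wpM2l.
      have w2 : lam ^+ 2 * (lam ^+ 2 * b k 0 ^+ 2) <= lam ^+ 2 * sqnorm a.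
        by apply: ler_wpM2l => //; apply: le_trans w1 s2.
      rewrite expr2 -mulrA; exact: le_trans w2 s1.
    have h0 : 0 <= lam ^+ 2 * `|b k 0| by rewrite mulr_ge0 // exprn_ge0 // ltW.
    by rewrite /Y -(ger0_norm h0) -sqrtr_sqr ler_sqrt // sqnorm_ge0.
  have hp : forall k l m, lam ^+ 3 * (`|A k l| * `|b m 0|) <= Y.
    move=> k l m.
    have -> : lam ^+ 3 * (`|A k l| * `|b m 0|) = (lam * `|A k l|) * (lam ^+ 2 * `|b m 0|).
      by rewrite exprS; ring.
    rewrite -[Y]mul1r; apply: ler_pM => //.
    - by rewrite mulr_ge0 // ltW.
    - by rewrite mulr_ge0 // exprn_ge0 // ltW.
  have tri : `|A i j * (b i 0 * a j 0 + b j 0 * a i 0) + A i i * b j 0 * a j 0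
               + A j j * b i 0 * a i 0| <=
             `|A i j| * `|b i 0| * `|a j 0| + `|A i j| * `|b j 0| * `|a i 0|
             + `|A i i| * `|b j 0| * `|a j 0| + `|A j j| * `|b i 0| * `|a i 0|.
    apply: le_trans (ler_normD _ _) _; rewrite !normrM.
    apply: lerD => //; apply: le_trans (ler_normD _ _) _; rewrite !normrM.
    apply: lerD => //; rewrite -mulrA -mulrA -mulrDr; apply: ler_wpM2l => //.
    by apply: le_trans (ler_normD _ _) _; rewrite !normrM.
  have key : `|Rij| * lam <= 8 * Y * (`|a i 0| + `|a j 0|).
    rewrite /Rij normrM ger0_norm; last by rewrite mulr_ge0 // exprn_ge0 // ltW.
    have t1 := hp i j i. have t2 := hp i j j. have t3 := hp i i j. have t4 := hp j j i.
    have := normr_ge0 (a i 0); have := normr_ge0 (a j 0).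
    have := normr_ge0 (A i j); have := normr_ge0 (A i i); have := normr_ge0 (A j j).
    have := normr_ge0 (b i 0); have := normr_ge0 (b j 0).
    have e3 : lam ^+ 3 = lam * lam ^+ 2 by rewrite exprS.
    set ai := `|a i 0| in tri *; set aj := `|a j 0| in tri *.
    set x1 := `|A i j| in tri t1 t2 *; set x2 := `|A i i| in tri t3 *;
    set x3 := `|A j j| in tri t4 *.
    set bi := `|b i 0| in tri t1 t4 *; set bj := `|b j 0| in tri t2 t3 *.
    set T := `|_| in tri *.
    move=> *.
    have u1 : lam ^+ 3 * (x1 * bi) * aj <= Y * aj by apply: ler_wpM2r.
    have u2 : lam ^+ 3 * (x1 * bj) * ai <= Y * ai by apply: ler_wpM2r.
    have u3 : lam ^+ 3 * (x2 * bj) * aj <= Y * aj by apply: ler_wpM2r.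
    have u4 : lam ^+ 3 * (x3 * bi) * ai <= Y * ai by apply: ler_wpM2r.
    have l3 : 0 < lam ^+ 3 by rewrite exprn_gt0.
    have v : lam ^+ 3 * T <= lam ^+ 3 * (x1 * bi * aj + x1 * bj * ai + x2 * bj * aj + x3 * bi * ai).
      by apply: ler_wpM2l => //; apply: ltW.
    have -> : 4 * lam ^+ 2 * T * lam = 4 * (lam ^+ 3 * T) by rewrite e3; ring.
    nra.
  have -> : 8 * Y * lam^-1 * (`|a i 0| + `|a j 0|) = 8 * Y * (`|a i 0| + `|a j 0|) / lam.
    by rewrite mulrAC.
  by rewrite ler_pdivlMr.
- move=> ai aj.
  have Ea : Emat i j *m a = 0.
    by apply/matrixP => k l; rewrite (ord1 l) Emul ai aj !mulr0 addr0 mxE.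
  split; last by rewrite /Rij ai aj; ring.
  rewrite /Ht -mulmxA Ea mulmx0 /sqnorm big1 ?mulr0 // => k _.
  by rewrite mxE expr0n.
Unshelve. all: by end_near.
Qed.
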